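(* Let $(\mathbf{W},\mathbf{b},\boldsymbol\rho)$ be a radial neural network with widths vector $\mathbf{n}=(n_0,\dots,n_L)$, weights $W_i\in\mathbb{R}^{n_i\times n_{i-1}}$, biases $b_i\in\mathbb{R}^{n_i}$ and radial rescaling activations $\rho_i=h_i^{(n_i)}$. Let $(\mathbf{W}^{\rm red},\mathbf{b}^{\rm red})$ be the weights and biases produced by the QR compression algorithm described below (for any choice of the complete QR decompositions in it). Then the feedforward function of $(\mathbf{W},\mathbf{b},\boldsymbol\rho)$ coincides with the feedforward function of the radial neural network $(\mathbf{W}^{\rm red},\mathbf{b}^{\rm red},\boldsymbol\rho^{\rm red})$ with widths vector $\mathbf{n}^{\rm red}$, where $\rho^{\rm red}_i=h_i^{(n^{\rm red}_i)}$ is the restriction of $\rho_i$ to $\mathbb{R}^{n^{\rm red}_i}\subseteq\mathbb{R}^{n_i}$.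
   Context: For $h:\mathbb{R}\to\mathbb{R}$ piecewise differentiable, $h^{(n)}:\mathbb{R}^n\to\mathbb{R}^n$ is $h^{(n)}(v)=h(|v|)v/|v|$ for $v\ne0$ and $h^{(n)}(0)=0$ (a radial rescaling function). A radial neural network with widths $(n_0,\dots,n_L)$ consists of $W_i\in\mathbb{R}^{n_i\times n_{i-1}}$, $b_i\in\mathbb{R}^{n_i}$ and radial rescaling functions $\rho_i$ on $\mathbb{R}^{n_i}$ ($i=1,\dots,L$); its feedforward function is $F=F_L$ with $F_0=\mathrm{id}_{\mathbb{R}^{n_0}}$, $F_i(x)=\rho_i(W_iF_{i-1}(x)+b_i)$. Reduced widths: $n^{\rm red}_0=n_0$, $n^{\rm red}_i=\min(n_i,n^{\rm red}_{i-1}+1)$ for $i=1,\dots,L-1$, $n^{\rm red}_L=n_L$. $\mathbb{R}^{k}$ is regarded as a subspace of $\mathbb{R}^{n}$ ($k\le n$) via the first $k$ coordinates; $\mathrm{Inc}_i\in\mathbb{R}^{n_i\times n^{\rm red}_i}$ is the matrix with ones on the main diagonal and zeros elsewhere. QR compression algorithm: set $A_1=[\,b_1\ W_1\,]\in\mathbb{R}^{n_1\times(n_0+1)}$. For $i=1,\dots,L-1$: compute a complete QR decomposition $A_i=Q_i\,\mathrm{Inc}_i\,R_i$ with $Q_i\in O(n_i)$ and $R_i$ upper triangular of size $n^{\rm red}_i\times(1+n^{\rm red}_{i-1})$; set $b^{\rm red}_i$ to be the first column of $R_i$ and $W^{\rm red}_i$ the remaining columns; set $A_{i+1}=[\,b_{i+1}\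 \ W_{i+1}Q_i\mathrm{Inc}_i\,]\in\mathbb{R}^{n_{i+1}\times(n^{\rm red}_i+1)}$. Finally $b^{\rm red}_L$ is the first column of $A_L$ and $W^{\rm red}_L$ the remaining columns. The algorithm also outputs $\mathbf{Q}=(Q_1,\dots,Q_{L-1})$. *)

(* Defs.v *)
From HB Require Import structures.
From mathcomp Require Import all_boot all_order all_algebra.
From mathcomp Require Import all_classical all_reals all_analysis.
Set Implicit Arguments. Unset Strict Implicit. Unset Printing Implicit Defensive.
Import Order.TTheory GRing.Theory Num.Theory.
Local Open Scope ring_scope.

Section RadialNets.
Variable R : realType.

Definition enorm n (v : 'cV[R]_n) : R := Num.sqrt (\sum_(j < n) v j 0 ^+ 2).

Definition piecewise_differentiable (h : R -> R) : Prop :=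
  exists s : seq R, forall x, x \notin s -> derivable h x 1.

Definition radial n (h : R -> R) (v : 'cV[R]_n) : 'cV[R]_n :=
  if v == 0 then 0 else (h (enorm v) / enorm v) *: v.

(* Feedforward function of a radial network with widths m (layers 1..L,
   the layer-i data being W i : R^{m i x m (i-1)}, b i, activation h i).
   ff m W b h k = F_k. *)
Fixpoint ff (m : nat -> nat) (W : forall i, 'M[R]_(m i, m i.-1))
  (b : forall i, 'cV[R]_(m i)) (h : nat -> R -> R) (k : nat) :
  'cV[R]_(m 0) -> 'cV[R]_(m k) :=
  match k with
  | 0 => fun x => x
  | k'.+1 => fun x => radial (h k'.+1) (W k'.+1 *m ff W b h k' x + b k'.+1)
  end.

Fixpoint nred_aux (n : nat -> nat) (k : nat) : nat :=
  match k with
  | 0 => n 0%N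
  | k'.+1 => minn (n k'.+1) (nred_aux n k').+1
  end.

Definition nred (n : nat -> nat) (L : nat) (k : nat) : nat :=
  match k with
  | 0 => n 0%N
  | _ => if k == L then n L else nred_aux n k
  end.

Definition Inc (p q : nat) : 'M[R]_(p, q) := \matrix_(r, c) ((r : nat) == c)%:R.

Definition orthogonal_mx n (Q : 'M[R]_n) : Prop := Q^T *m Q = 1%:M.

Definition upper_triangular p q (M : 'M[R]_(p, q)) : Prop :=
  forall (r : 'I_p) (c : 'I_q), (c < r)%N -> M r c = 0.

Section QR.
Variables (n : nat -> nat) (L : nat).
Variables (W : forall i, 'M[R]_(n i, n i.-1)) (b : forall i, 'cV[R]_(n i)).
Variable Q : forall i, 'M[R]_(n i).              (* Q_1, ..., Q_{L-1} *)
Variable Rm : forall i, 'M[R]_(nred n L i, 1 + nred n L i.-1). (* R_1..R_{L-1} *)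

Definition QInc (i : nat) : 'M[R]_(n i, nred n L i) :=
  match i return 'M[R]_(n i, nred n L i) with
  | 0 => 1%:M
  | i'.+1 => Q i'.+1 *m Inc (n i'.+1) (nred n L i'.+1)
  end.

Definition Amx (i : nat) : 'M[R]_(n i, 1 + nred n L i.-1) :=
  row_mx (b i) (W i *m QInc i.-1).

(* output of the QR compression: b^red_i, W^red_i are the first column /
   remaining columns of R_i for i < L, and of A_L for i = L (where
   n^red_L = n_L; conform_mx only performs this identity cast). *)
Definition Wred (i : nat) : 'M[R]_(nred n L i, nred n L i.-1) :=
  if i == L then conform_mx (rsubmx (Rm i)) (rsubmx (Amx i))
  else rsubmx (Rm i).

Definition bred (i : nat) : 'cV[R]_(nred n L i) :=
  if i == L then conform_mx (lsubmx (Rm i)) (lsubmx (Amx i))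
  else lsubmx (Rm i).

Definition QR_compression_valid : Prop :=
  forall i, (0 < i < L)%N ->
    [/\ orthogonal_mx (Q i), upper_triangular (Rm i) &
        Amx i = Q i *m Inc (n i) (nred n L i) *m Rm i].

End QR.

Lemma nredL (n : nat -> nat) (L : nat) : nred n L L = n L.
Proof. by case: L => [|L] //=; rewrite eqxx. Qed.

End RadialNets.

(* Main.v *)
Require Import Defs.
From HB Require Import structures.
From mathcomp Require Import all_boot all_order all_algebra.
From mathcomp Require Import all_classical all_reals all_analysis.
Import Order.TTheory GRing.Theory Num.Theory.
Local Open Scope ring_scope.

Section Aux.
Variable R : realType.

Lemma castmx_eqid (p : nat) (e : p = p) q (A : 'M[R]_(p, q)) :
  castmx (e, erefl q) A = A.
Proof. by apply/matrixP => i j; rewrite castmxE /=; congr (A _ _); apply: val_inj. Qed.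

Lemma castmx_eqid2 (p q : nat) (e1 : p = p) (e2 : q = q) (A : 'M[R]_(p, q)) :
  castmx (e1, e2) A = A.
Proof. by apply/matrixP => i j; rewrite castmxE /=; congr (A _ _); apply: val_inj. Qed.

Lemma conform_cast p p' q (e : p = p') (B : 'M[R]_(p', q)) (A : 'M[R]_(p, q)) :
  conform_mx B A = castmx (e, erefl q) A.
Proof. by case: p' / e B => B; rewrite conform_mx_id castmx_id. Qed.

Lemma castmx_mulmx p p' q r (e : p = p') (A : 'M[R]_(p, q)) (B : 'M[R]_(q, r)) :
  castmx (e, erefl q) A *m B = castmx (e, erefl r) (A *m B).
Proof. by case: p' / e; rewrite !castmx_id. Qed.

Lemma castmx_add p p' q (e : p = p') (A B : 'M[R]_(p, q)) :
  castmx (e, erefl q) A + castmx (e, erefl q) B = castmx (e, erefl q) (A + B).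
Proof. by case: p' / e; rewrite !castmx_id. Qed.

Lemma radial_cast p p' (e : p = p') hh (v : 'cV[R]_p) :
  radial hh (castmx (e, erefl 1%N) v) = castmx (e, erefl 1%N) (radial hh v).
Proof. by case: p' / e; rewrite !castmx_id. Qed.

Lemma enormE p (v : 'cV[R]_p) : enorm v = Num.sqrt ((v^T *m v) 0 0).
Proof.
rewrite /enorm mxE; congr Num.sqrt; apply: eq_bigr => j _.
by rewrite mxE expr2.
Qed.

Lemma radial_iso p q (M : 'M[R]_(p, q)) hh (v : 'cV[R]_q) :
  M^T *m M = 1%:M -> radial hh (M *m v) = M *m radial hh v.
Proof.
move=> HM.
have En : enorm (M *m v) = enorm v.
  by rewrite !enormE trmx_mul mulmxA -(mulmxA v^T) HM mulmx1.
rewrite /radial En.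
case: ifP => [/eqP Mv0|/negbT Mvn0]; case: ifP => [/eqP v0|/negbT vn0].
- by symmetry; exact: mulmx0.
- exfalso; move/eqP: vn0; apply.
  by rewrite -[v]mul1mx -HM -mulmxA Mv0; exact: mulmx0.
- by exfalso; move/eqP: Mvn0; apply; rewrite v0; exact: mulmx0.
- by rewrite scalemxAr.
Qed.

Lemma Inc_iso p q : (q <= p)%N -> (Inc R p q)^T *m Inc R p q = 1%:M.
Proof.
move=> le; apply/matrixP => r c; rewrite !mxE.
rewrite (bigD1 (widen_ord le r)) //= big1 ?addr0.
  by rewrite !mxE eqxx mul1r.
move=> k /eqP nk; rewrite !mxE.
have -> : ((k : nat) == r) = false.
  by apply/negbTE/eqP => H; apply: nk; apply: val_inj.
by rewrite mul0r.
Qed.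

End Aux.

Section W.
Variables (R : realType) (n : nat -> nat) (L : nat).
Variables (W : forall i, 'M[R]_(n i, n i.-1)) (b : forall i, 'cV[R]_(n i)).
Variable Q : forall i, 'M[R]_(n i).
Variable Rm : forall i, 'M[R]_(nred n L i, 1 + nred n L i.-1).
Lemma Wred_ne i : i != L -> Wred W b Q Rm i = rsubmx (Rm i).
Proof. by move=> H; rewrite /Wred (negbTE H). Qed.
Lemma bred_ne i : i != L -> bred W b Q Rm i = lsubmx (Rm i).
Proof. by move=> H; rewrite /bred (negbTE H). Qed.
Lemma Wred_L : Wred W b Q Rm L = conform_mx (rsubmx (Rm L)) (rsubmx (Amx L W b Q L)).
Proof. by rewrite /Wred eqxx. Qed.
Lemma bred_L : bred W b Q Rm L = conform_mx (lsubmx (Rm L)) (lsubmx (Amx L W b Q L)).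
Proof. by rewrite /bred eqxx. Qed.
End W.

Theorem theorem3 (R : realType) (n : nat -> nat) (L : nat)
  (W : forall i, 'M[R]_(n i, n i.-1)) (b : forall i, 'cV[R]_(n i))
  (h : nat -> R -> R)
  (Q : forall i, 'M[R]_(n i))
  (Rm : forall i, 'M[R]_(nred n L i, 1 + nred n L i.-1)) :
  (forall i, (0 < i <= L)%N -> piecewise_differentiable (h i)) ->
  QR_compression_valid W b Q Rm ->
  forall x : 'cV[R]_(n 0%N),
    ff W b h L x =
    castmx (nredL n L, erefl 1%N)
      (ff (Wred W b Q Rm) (bred W b Q Rm) h L x).
Proof.
move=> _ HQR x.
have inv : forall i, (i < L)%N ->
    ff W b h i x = QInc L Q i *m ff (Wred W b Q Rm) (bred W b Q Rm) h i x.
  elim=> [|i IH] Hi; first by rewrite /= mul1mx.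
  have [Hort Hut HA] := HQR i.+1 Hi.
  have HiL : (i.+1 == L) = false by apply/negbTE; rewrite neq_ltn Hi.
  have le : (nred n L i.+1 <= n i.+1)%N by rewrite /= HiL geq_minl.
  have Hiso : (QInc L Q i.+1)^T *m QInc L Q i.+1 = 1%:M.
    rewrite /= trmx_mul mulmxA -(mulmxA _ (Q i.+1)^T) Hort mulmx1.
    exact: Inc_iso.
  rewrite [LHS]/= [X in _ = _ *m X]/= -radial_iso //; congr radial.
  rewrite IH ?(ltnW Hi) //.
  set G := ff (Wred W b Q Rm) _ _ i x.
  have E1 : Amx L W b Q i.+1 *m col_mx 1%:M G = b i.+1 + W i.+1 *m (QInc L Q i *m G).
    by rewrite /Amx mul_row_col mulmx1 mulmxA.
  rewrite [W _ *m _ + _]addrC -E1 HA Wred_ne ?bred_ne ?HiL //.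
  rewrite -!mulmxA; congr (_ *m (_ *m _)).
  by rewrite -{1}(hsubmxK (Rm i.+1)) mul_row_col mulmx1 addrC.
move: (nredL n L) inv HQR; case: L Rm => [|l] Rm e inv HQR.
  by rewrite castmx_eqid.
rewrite [LHS]/= inv //.
set G := ff (Wred W b Q Rm) _ _ l x.
rewrite -[ff (Wred _ _ _ _) _ h l.+1 x]/(radial (h l.+1) (Wred W b Q Rm l.+1 *m G + bred W b Q Rm l.+1)).
have -> : Wred W b Q Rm l.+1 *m G + bred W b Q Rm l.+1 =
    castmx (esym e, erefl 1%N) (W l.+1 *m (QInc l.+1 Q l *m G) + b l.+1).
  have E2 : rsubmx (Amx l.+1 W b Q l.+1) = W l.+1 *m QInc l.+1 Q l := row_mxKr _ _.
  have E3 : lsubmx (Amx l.+1 W b Q l.+1) = b l.+1 := row_mxKl _ _.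
  rewrite Wred_L bred_L E2 E3.
  rewrite (@conform_cast R _ _ _ (esym e) _ (W l.+1 *m QInc l.+1 Q l)).
  rewrite (@conform_cast R _ _ _ (esym e) _ (b l.+1)).
  by rewrite castmx_mulmx castmx_add mulmxA.
rewrite radial_cast castmx_comp.
by rewrite castmx_eqid2.
Qed.
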